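(* Let $s$ be a scoring vector with all entries positive, and assume $m=dn$ with $d$ a positive integer. There exist a preference profile $P$ and a vector $k$ (namely $k_1=\cdots=k_n=d$) such that $$\frac{(n-1)\sum_{j=1}^{d}s_j+\sum_{j=d+1}^{2d}s_j}{\sum_{j=1}^m s_j}\le\mathcal{P}^u_{AtoP}\le\frac{n\sum_{j=1}^{d}s_j}{\sum_{j=1}^m s_j},$$ $$\frac{\sum_{j=d+1}^{2d}s_j}{\sum_{j=(n-1)d+1}^m s_j}\le\mathcal{P}^e_{AtoP}\le\frac{\sum_{j=1}^{d}s_j}{\sum_{j=(n-1)d+1}^m s_j},$$ $$\frac{\big(\sum_{j=1}^{d}s_j\big)^{n-1}\big(\sum_{j=d+1}^{2d}s_j\big)}{\prod_{i=1}^n\sum_{j=(i-1)d+1}^{id}s_j}\le\mathcal{P}^n_{AtoP}\le\frac{\big(\sum_{j=1}^{d}s_j\big)^{n}}{\prod_{i=1}^n\sum_{j=(i-1)d+1}^{id}s_j}.$$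
   Context: There are $n$ agents $a_1,\ldots,a_n$ and $m$ items. A preference profile $P=(\succ_{a_1},\ldots,\succ_{a_n})$ assigns to each agent a strict ranking of the items. A scoring vector $s=(s_1,\ldots,s_m)$ satisfies $s_1\ge\cdots\ge s_m$; an agent's value for her $j$-th preferred item is $s_j$, utilities are additive. Given $k=(k_1,\ldots,k_n)$ with non-negative integer entries summing to $m$, agent $a_1$ first picks $k_1$ items, then $a_2$ picks $k_2$ of the remaining ones, etc., each greedily picking her most preferred remaining items; $U^k_P(a)$ is the total score $a$ receives. $SW^u_P(k)=\sum_a U^k_P(a)$, $SW^e_P(k)=\min_a U^k_P(a)$, $SW^n_P(k)=\prod_a U^k_P(a)$. For a permutation $\pi$ of $[n]$, $P_\pi$ is the profile obtained from $P$ by permuting the agents' rankings according to $\pi$. The price of assignment of agents to positions is $\mathcal{P}^x_{AtoP}=\max_{\pi}SW^x_{P_\pi}(k)/\min_{\pi}SW^x_{P_\pi}(k)$ for $x\in\{u,e,n\}$, with $\pi$ ranging over all permutations of $[n]$. *)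

(* Defs.v *)
From mathcomp Require Import all_boot all_order all_algebra.
From mathcomp Require Import fingroup perm.
Set Implicit Arguments. Unset Strict Implicit. Unset Printing Implicit Defensive.
Import Order.TTheory GRing.Theory Num.Theory.
Local Open Scope ring_scope.

(* Agents are 'I_n (agent a_{i+1} is ordinal i), items are 'I_m.
   A profile assigns to each agent a strict ranking of the items, given as a
   permutation: (P a) j is the (j+1)-th preferred item of agent a. *)
Definition profile (n m : nat) := 'I_n -> {perm 'I_m}.

Definition ranking n m (P : profile n m) (a : 'I_n) : seq 'I_m :=
  [seq P a j | j <- enum 'I_m].

(* Items still available before agent number i (0-based) picks, and the
   bundle picked by agent number i: greedily her k_i most preferred
   remaining items. *)
Fixpoint avail n m (P : profile n m) (k : 'I_n -> nat) (i : nat) : {set 'I_m} :=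
  match i with
  | 0 => [set: 'I_m]
  | i'.+1 =>
      let A := avail P k i' in
      match insub i' : option 'I_n with
      | Some a => A :\: [set x in take (k a) [seq x <- ranking P a | x \in A]]
      | None => A
      end
  end.

Definition bundle n m (P : profile n m) (k : 'I_n -> nat) (a : 'I_n) : seq 'I_m :=
  take (k a) [seq x <- ranking P a | x \in avail P k a].

(* Scoring vector s is 1-indexed: s j = s_j. Item x has value s_{r+1} for
   agent a if x is at 0-based position r in a's ranking. *)
Definition utility (R : numDomainType) n m (s : nat -> R) (P : profile n m)
  (k : 'I_n -> nat) (a : 'I_n) : R :=
  \sum_(x <- bundle P k a) s (((P a)^-1)%g x).+1.

(* Minimum of a list (0 for the empty list; never used on empty lists here). *)
Definition seqmin (R : realDomainType) (l : seq R) : R :=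
  \big[Num.min/head 0 l]_(x <- l) x.
Definition seqmax (R : realDomainType) (l : seq R) : R :=
  \big[Num.max/head 0 l]_(x <- l) x.

Definition SWu (R : realDomainType) n m s (P : profile n m) k : R :=
  \sum_(a : 'I_n) utility s P k a.
Definition SWe (R : realDomainType) n m s (P : profile n m) k : R :=
  seqmin [seq utility s P k a | a <- enum 'I_n].
Definition SWn (R : realDomainType) n m s (P : profile n m) k : R :=
  \prod_(a : 'I_n) utility s P k a.

Definition permute_profile n m (P : profile n m) (pi : {perm 'I_n}) : profile n m :=
  fun a => P (pi a).

Definition price_AtoP (R : realFieldType) n m
  (SW : profile n m -> ('I_n -> nat) -> R) (P : profile n m) (k : 'I_n -> nat) : R :=
  seqmax [seq SW (permute_profile P pi) k | pi <- enum {perm 'I_n}] /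
  seqmin [seq SW (permute_profile P pi) k | pi <- enum {perm 'I_n}].

(* Main.v *)
Require Import Defs.
From mathcomp Require Import all_boot all_order all_algebra.
From mathcomp Require Import fingroup perm zify.
Set Warnings "-notation-overridden,-ambiguous-paths".
Set Implicit Arguments. Unset Strict Implicit. Unset Printing Implicit Defensive.
Import Order.TTheory GRing.Theory Num.Theory.
Local Open Scope ring_scope.


Lemma filter_enum (T : finType) (p : pred T) : [seq j <- enum T | p j] = enum p.
Proof. by rewrite /enum_mem filter_predT. Qed.

Definition posl n m (Q : profile n m) d (a : 'I_n) : seq 'I_m :=
  [seq j <- enum 'I_m | Q a j \in avail Q (fun _ => d) a].

Lemma bundle_eq n m (Q : profile n m) d a :
  bundle Q (fun _ => d) a = map (Q a) (take d (posl Q d a)).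
Proof. by rewrite /bundle /ranking filter_map -map_take. Qed.

Lemma utility_eq (R : numDomainType) (s : nat -> R) n m (Q : profile n m) d a :
  utility s Q (fun _ => d) a = \sum_(j <- take d (map val (posl Q d a))) s j.+1.
Proof.
rewrite /utility bundle_eq big_map -map_take big_map.
by apply: eq_bigr => j _; rewrite permK.
Qed.

Lemma posl_sorted n m (Q : profile n m) d a : sorted ltn (map val (posl Q d a)).
Proof.
have H : sorted (relpre val ltn) (enum 'I_m).
  by rewrite -sorted_map val_enum_ord iota_ltn_sorted.
rewrite sorted_map; apply: sorted_filter => //.
by move=> x y z; apply: ltn_trans.
Qed.

Lemma posl_lt n m (Q : profile n m) d a x : x \in map val (posl Q d a) -> (x < m)%N.
Proof. by move=> /mapP [j _ ->]; apply: ltn_ord. Qed.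

Lemma posl_size n m (Q : profile n m) d a :
  size (map val (posl Q d a)) = #|avail Q (fun _ => d) a|.
Proof.
rewrite size_map /posl filter_enum -cardE.
rewrite -(card_preimset (avail Q (fun _ => d) a) (@perm_inj _ (Q a))).
by apply: eq_card => j; rewrite inE.
Qed.

Lemma avail_S n m (Q : profile n m) d (a : 'I_n) :
  avail Q (fun _ => d) (val a).+1 =
  avail Q (fun _ => d) a :\: [set x in bundle Q (fun _ => d) a].
Proof.
rewrite /=; case: insubP => [b _ hb|]; last by rewrite ltn_ord.
by have -> : b = a by apply: val_inj.
Qed.

Lemma card_avail n m (Q : profile n m) d (hm : m = (d * n)%N) i :
  (i <= n)%N -> #|avail Q (fun _ => d) i| = (m - i * d)%N.
Proof.
elim: i => [|i IH] hi.
  by rewrite /= cardsT card_ord mul0n subn0.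
have hin : (i < n)%N by [].
have := avail_S Q d (Ordinal hin) => /= ->.
rewrite cardsD.
set A := avail Q _ i.
set B := [set x in _].
have hBA : B \subset A.
  apply/subsetP => x; rewrite inE bundle_eq => /mapP [j].
  by move/mem_take; rewrite mem_filter => /andP [h _] ->.
rewrite (setIidPr hBA) cardsE.
have Hu : uniq (bundle Q (fun _ => d) (Ordinal hin)).
  rewrite bundle_eq map_inj_uniq; last exact: perm_inj.
  by apply: take_uniq; apply: filter_uniq; apply: enum_uniq.
rewrite (card_uniqP Hu) bundle_eq size_map size_takel.
  by rewrite IH ?(ltnW hin) //; rewrite mulSn; lia.
have := posl_size Q d (Ordinal hin); rewrite size_map => ->.
rewrite IH ?(ltnW hin) // hm; nia.
Qed.
Lemma nth_gap (V : seq nat) : sorted ltn V ->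
  forall i k, (i + k < size V)%N -> (nth 0 V i + k <= nth 0 V (i + k))%N.
Proof.
move=> sV i; elim=> [|k IH] h; first by rewrite !addn0.
have h1 : (i + k < size V)%N by lia.
have := IH h1.
have : (nth 0 V (i + k) < nth 0 V (i + k.+1))%N.
  apply: (sorted_ltn_nth ltn_trans) => //; rewrite ?inE; lia.
lia.
Qed.

Lemma nth_lb (V : seq nat) lo i : sorted ltn V -> (forall x, x \in V -> lo <= x)%N ->
  (i < size V)%N -> (lo + i <= nth 0 V i)%N.
Proof.
move=> sV H hi; have := @nth_gap V sV 0 i; rewrite add0n => /(_ hi).
have : (lo <= nth 0 V 0)%N by apply: H; apply: mem_nth; apply: leq_ltn_trans hi.
lia.
Qed.

Lemma nth_ub (V : seq nat) m i : sorted ltn V -> (forall x, x \in V -> x < m)%N ->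
  (i < size V)%N -> (nth 0 V i + (size V - i) <= m)%N.
Proof.
move=> sV H hi; have := @nth_gap V sV i (size V - i).-1.
have -> : (i + (size V - i).-1 = (size V).-1)%N by lia.
move=> /(_ ltac:(lia)).
have : (nth 0 V (size V).-1 < m)%N by apply: H; apply: mem_nth; rewrite prednK ?leqnn //; apply: leq_ltn_trans hi.
lia.
Qed.

Lemma sum_take (R : numDomainType) (F : nat -> R) (V : seq nat) d :
  (d <= size V)%N -> \sum_(j <- take d V) F j = \sum_(i < d) F (nth 0%N V i).
Proof.
move=> hd; rewrite (big_nth 0%N) size_takel // big_mkord.
by apply: eq_bigr => i _; rewrite nth_take.
Qed.

Lemma sum_take_bounds (R : numDomainType) (s : nat -> R) m (V : seq nat) d :
  (forall i j, (1 <= i <= j)%N -> (j <= m)%N -> s j <= s i) ->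
  sorted ltn V -> (forall x, x \in V -> x < m)%N -> (d <= size V)%N ->
  \sum_(i < d) s (i + (m - size V)).+1 <= \sum_(j <- take d V) s j.+1 <= \sum_(i < d) s i.+1.
Proof.
move=> hmono sV H hd; rewrite sum_take //; apply/andP; split; apply: ler_sum => i _;
  have hi := ltn_ord i; have hiV : (i < size V)%N by apply: leq_trans hi hd;
  have h2 : (nth 0 V i < m)%N by (apply: H; apply: mem_nth).
  have h1 := @nth_ub V m i sV H hiV.
  have h0 := @nth_ub V m 0 sV H (leq_ltn_trans (leq0n i) hiV).
  apply: hmono; [apply/andP; split|]; lia.
have h1 := @nth_lb V 0 i sV (fun x _ => leq0n x) hiV.
have h2 : (nth 0 V i < m)%N by (apply: H; apply: mem_nth).
apply: hmono; [apply/andP; split|]; lia.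
Qed.
Lemma bigmin_ge (R : realDomainType) (r : seq R) idx c :
  c <= idx -> (forall x, x \in r -> c <= x) -> c <= \big[Num.min/idx]_(x <- r) x.
Proof.
move=> hi; elim: r => [|z r IH] H; first by rewrite big_nil.
rewrite big_cons le_min H ?inE ?eqxx //=; apply: IH => x hx; by apply: H; rewrite inE hx orbT.
Qed.

Lemma bigmin_le (R : realDomainType) (r : seq R) idx x :
  x \in r -> \big[Num.min/idx]_(y <- r) y <= x.
Proof.
elim: r => [//|z r IH]; rewrite inE big_cons ge_min => /orP[/eqP->|h].
  by rewrite lexx.
by rewrite IH ?orbT.
Qed.

Lemma bigmax_le' (R : realDomainType) (r : seq R) idx c :
  idx <= c -> (forall x, x \in r -> x <= c) -> \big[Num.max/idx]_(x <- r) x <= c.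
Proof.
move=> hi; elim: r => [|z r IH] H; first by rewrite big_nil.
rewrite big_cons ge_max H ?inE ?eqxx //=; apply: IH => x hx; by apply: H; rewrite inE hx orbT.
Qed.

Lemma bigmax_ge' (R : realDomainType) (r : seq R) idx x :
  x \in r -> x <= \big[Num.max/idx]_(y <- r) y.
Proof.
elim: r => [//|z r IH]; rewrite inE big_cons le_max => /orP[/eqP->|h].
  by rewrite lexx.
by rewrite IH ?orbT.
Qed.

Lemma seqmin_ge (R : realDomainType) (l : seq R) c :
  l != [::] -> (forall x, x \in l -> c <= x) -> c <= seqmin l.
Proof.
case: l => [//|y l] _ H; rewrite /seqmin /=; apply: bigmin_ge => //.
by apply: H; rewrite inE eqxx.
Qed.

Lemma seqmin_le (R : realDomainType) (l : seq R) x : x \in l -> seqmin l <= x.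
Proof. exact: bigmin_le. Qed.

Lemma seqmax_le (R : realDomainType) (l : seq R) c :
  l != [::] -> (forall x, x \in l -> x <= c) -> seqmax l <= c.
Proof.
case: l => [//|y l] _ H; rewrite /seqmax /=; apply: bigmax_le' => //.
by apply: H; rewrite inE eqxx.
Qed.

Lemma seqmax_ge (R : realDomainType) (l : seq R) x : x \in l -> x <= seqmax l.
Proof. exact: bigmax_ge'. Qed.

Lemma div_le (R : realFieldType) (x M y S : R) :
  0 <= x -> x <= M -> 0 < y -> y <= S -> x / S <= M / y.
Proof.
move=> x0 xM y0 yS; have S0 : 0 < S by apply: lt_le_trans yS.
apply: ler_pM => //; first by rewrite invr_ge0 ltW.
by rewrite lef_pV2 ?posrE.
Qed.

Lemma util_bounds (R : numDomainType) (s : nat -> R) n m (Q : profile n m) d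
  (hm : m = (d * n)%N)
  (hmono : forall i j, (1 <= i <= j)%N -> (j <= m)%N -> s j <= s i) (a : 'I_n) :
  \sum_(i < d) s (i + a * d).+1 <= utility s Q (fun _ => d) a <= \sum_(i < d) s i.+1.
Proof.
rewrite utility_eq.
have hs : size (map val (posl Q d a)) = (m - a * d)%N.
  by rewrite posl_size card_avail // ltnW.
have ha := ltn_ord a.
have hd : (d <= size (map val (posl Q d a)))%N by rewrite hs hm; nia.
have := sum_take_bounds hmono (posl_sorted Q d a) (@posl_lt _ _ Q d a) hd.
have -> : (m - size (map val (posl Q d a)) = a * d)%N by rewrite hs hm; nia.
by [].
Qed.


Lemma div_eqE d j t : (0 < d)%N -> (j %/ d == t)%N = (t * d <= j < t * d + d)%N.
Proof.
move=> hd; rewrite eqn_leq -ltnS ltn_divLR // leq_divRL // andbC.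
by rewrite mulSn addnC.
Qed.

Lemma big_iota_ord (R : numDomainType) (F : nat -> R) a b :
  \sum_(j <- iota a b) F j = \sum_(i < b) F (a + i)%N.
Proof.
rewrite -{1}(addn0 a) iotaDl big_map.
have -> : iota 0 b = index_iota 0 b by rewrite /index_iota subn0.
by rewrite big_mkord.
Qed.

Lemma exact_step (R : numDomainType) (s : nat -> R) n m (Q : profile n m) d
  (hd : (0 < d)%N) (a : 'I_n) (sg : nat -> nat) (sginj : injective sg)
  (hQ : forall j : 'I_m, (Q a j %/ d)%N = sg (j %/ d)%N) (T : pred nat)
  (hA : forall x : 'I_m, (x \in avail Q (fun _ => d) a) = T (x %/ d)%N) (t : nat)
  (hb : forall b, (b < t)%N -> ~~ T (sg b)) (ht : T (sg t)) (htm : (t.+1 * d <= m)%N) :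
  utility s Q (fun _ => d) a = \sum_(i < d) s (t * d + i).+1 /\
  forall x : 'I_m, (x \in avail Q (fun _ => d) (val a).+1) = T (x %/ d)%N && (x %/ d != sg t)%N.
Proof.
have Hp : map val (posl Q d a) = [seq j <- iota 0 m | T (sg (j %/ d)%N)].
  rewrite /posl -val_enum_ord filter_map; congr map; apply: eq_filter => j.
  by rewrite /= hA hQ.
have Ht : take d (map val (posl Q d a)) = iota (t * d) d.
  rewrite Hp (_ : m = t * d + (d + (m - t.+1 * d)))%N; last by rewrite mulSn in htm *; lia.
  rewrite !iotaD filter_cat add0n.
  have -> : [seq j <- iota 0 (t * d) | T (sg (j %/ d)%N)] = [::].
    apply/eqP; rewrite -size_eq0 size_filter -leqn0 leqNgt -has_count.
    apply/hasPn => j; rewrite mem_iota add0n => /andP [_ hj] /=.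
    by apply: hb; rewrite ltn_divLR.
  rewrite cat0s filter_cat (all_filterP _) ?take_size_cat ?size_iota //.
  apply/allP => j; rewrite mem_iota => hj.
  by have /eqP -> : (j %/ d == t)%N by rewrite div_eqE.
split.
  by rewrite utility_eq Ht big_iota_ord.
move=> x; rewrite avail_S in_setD inE hA.
set y := ((Q a)^-1)%g x.
have hx : (x %/ d)%N = sg (y %/ d)%N by rewrite -hQ permKV.
rewrite bundle_eq -{1}(permKV (Q a) x) mem_map; last exact: perm_inj.
have -> : (y \in take d (posl Q d a)) = (val y \in iota (t * d) d).
  by rewrite -Ht -map_take mem_map //; exact: val_inj.
by rewrite mem_iota hx (inj_eq sginj) div_eqE // andbC.
Qed.


Definition rotb (lo c b : nat) : nat :=
  if (lo <= b < c)%N then (if b == lo then c.-1 else b.-1) else b.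

Lemma rotb_inj lo c : injective (rotb lo c).
Proof.
move=> x y; rewrite /rotb.
case: (boolP (lo <= x < c)%N) => hx; case: (boolP (lo <= y < c)%N) => hy;
case: (boolP (x == lo)) => ex; case: (boolP (y == lo)) => ey; lia.
Qed.

Definition sgA n (a : nat) := if a == 0%N then rotb 1 n else rotb 0 a.

Lemma sgA_inj n a : injective (sgA n a).
Proof. by rewrite /sgA; case: ifP => _; apply: rotb_inj. Qed.

Lemma sgA_bound n (a : 'I_n) b : (b < n)%N -> (sgA n a b < n)%N.
Proof.
have ha := ltn_ord a; rewrite /sgA /rotb => hb.
case: ifP => _; case: ifP => h1; try case: ifP => h2; lia.
Qed.

Definition itemf d n (sg : nat -> nat) (j : 'I_(d * n)) : 'I_(d * n) :=
  insubd j (sg (j %/ d) * d + j %% d)%N.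

Lemma itemf_val d n sg (hsg : forall b, (b < n)%N -> (sg b < n)%N) j :
  val (@itemf d n sg j) = (sg (j %/ d) * d + j %% d)%N.
Proof.
rewrite /itemf val_insubd; case: ifP => // /negP []; rewrite -/(is_true _).
have hj := ltn_ord j.
have hd : (0 < d)%N by case: d j hj => //.
have hjd : (j %/ d < n)%N by rewrite ltn_divLR //; lia.
have := hsg _ hjd; have := ltn_pmod j hd; nia.
Qed.

Lemma itemf_div d n sg (hsg : forall b, (b < n)%N -> (sg b < n)%N) j :
  (val (@itemf d n sg j) %/ d = sg (j %/ d))%N.
Proof.
have hj := ltn_ord j.
have hd : (0 < d)%N by case: d j hj => //.
by rewrite itemf_val // divnMDl // (divn_small (ltn_pmod _ hd)) addn0.
Qed.

Lemma itemf_inj d n sg (sginj : injective sg) (hsg : forall b, (b < n)%N -> (sg b < n)%N) :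
  injective (@itemf d n sg).
Proof.
move=> j1 j2 h.
have hj := ltn_ord j1.
have hd : (0 < d)%N by case: d j1 j2 h hj => //.
have e1 : (j1 %/ d = j2 %/ d)%N.
  by apply: sginj; rewrite -!(itemf_div hsg) h.
have e2 : (j1 %% d = j2 %% d)%N.
  by have := congr1 (fun x : 'I_(d*n) => (val x %% d)%N) h; rewrite /= !itemf_val // !modnMDl !modn_mod.
by apply: val_inj; rewrite /= (divn_eq j1 d) (divn_eq j2 d) e1 e2.
Qed.

Definition Pf d n (a : 'I_n) : {perm 'I_(d * n)} :=
  perm (@itemf_inj d n (sgA n a) (@sgA_inj n a) (@sgA_bound n a)).

Definition Pprof d n : profile n (d * n) := fun a => @Pf d n a.

Lemma Pprof_div d n (a : 'I_n) j : (val (@Pprof d n a j) %/ d = sgA n a (j %/ d))%N.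
Proof. by rewrite /Pprof /Pf permE itemf_div //; apply: sgA_bound. Qed.


Lemma sgA_diag n i : sgA n i i = i.
Proof. rewrite /sgA /rotb; (do ?(case: ifP => ?)); lia. Qed.

Lemma sgA_lt n i b : (b < i)%N -> (sgA n i b < i)%N.
Proof. rewrite /sgA /rotb => h; (do ?(case: ifP => ?)); lia. Qed.

Lemma blk_lt d n (x : 'I_(d * n)) : (x %/ d < n)%N.
Proof.
have hj := ltn_ord x.
have hd : (0 < d)%N by case: d x hj => //.
rewrite ltn_divLR //; lia.
Qed.

Lemma id_run (R : numDomainType) (s : nat -> R) n d (hd : (0 < d)%N) i :
  (i <= n)%N -> forall x : 'I_(d * n),
  (x \in avail (permute_profile (@Pprof d n) 1) (fun _ => d) i) = (i <= x %/ d)%N.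
Proof.
elim: i => [|i IH] hi x; first by rewrite /= in_setT.
have hin : (i < n)%N by [].
have hQ : forall j : 'I_(d * n),
    (permute_profile (@Pprof d n) 1 (Ordinal hin) j %/ d)%N = sgA n i (j %/ d)%N.
  by move=> j; rewrite /permute_profile perm1 Pprof_div.
have [_ H] := exact_step s hd (@sgA_inj n i) hQ (T := fun b => (i <= b)%N)
  (IH (ltnW hi)) (t := i) (fun b hb => ltac:(rewrite -ltnNge; exact: sgA_lt hb))
  ltac:(by rewrite sgA_diag) ltac:(nia).
by rewrite H sgA_diag; lia.
Qed.

Lemma id_util (R : numDomainType) (s : nat -> R) n d (hd : (0 < d)%N) (a : 'I_n) :
  utility s (permute_profile (@Pprof d n) 1) (fun _ => d) a = \sum_(i < d) s (a * d + i).+1.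
Proof.
have hin := ltn_ord a.
have hQ : forall j : 'I_(d * n),
    (permute_profile (@Pprof d n) 1 a j %/ d)%N = sgA n a (j %/ d)%N.
  by move=> j; rewrite /permute_profile perm1 Pprof_div.
have [-> _] := exact_step s hd (@sgA_inj n a) hQ (T := fun b => (a <= b)%N)
  (id_run s hd (ltnW hin)) (t := a) (fun b hb => ltac:(rewrite -ltnNge; exact: sgA_lt hb))
  ltac:(by rewrite sgA_diag) ltac:(nia).
by [].
Qed.

Definition swp (p : nat) : nat := if p == 0%N then 1%N else if p == 1%N then 0%N else p.
Definition Tm n p b : bool :=
  if p == 0%N then true else if p == 1%N then (1 <= b)%N else (p.-1 <= b < n.-1)%N.
Definition tp (p : nat) : nat := if p == 1%N then 1%N else 0%N.

Lemma tperm_val n (i0 i1 : 'I_n) (h0 : val i0 = 0%N) (h1 : val i1 = 1%N) (a : 'I_n) :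
  val (tperm i0 i1 a) = swp a.
Proof.
rewrite /swp; case: tpermP => [->|->|/eqP na0 /eqP na1].
- by rewrite h0 h1.
- by rewrite h0 h1.
have : (val a != 0%N) by rewrite -h0; apply: contra na0 => /eqP /val_inj ->.
have : (val a != 1%N) by rewrite -h1; apply: contra na1 => /eqP /val_inj ->.
by move=> /negPf -> /negPf ->.
Qed.

Lemma max_hb n p b : (2 <= n)%N -> (p < n)%N -> (b < tp p)%N -> ~~ Tm n p (sgA n (swp p) b).
Proof.
move=> h1; case: p => [|[|p]] h2 h3 /=; move: h3; rewrite /Tm /sgA /rotb /swp /tp /=;
  (do ?(case: ifP => ?)); intros; lia.
Qed.

Lemma max_ht n p : (2 <= n)%N -> (p < n)%N -> Tm n p (sgA n (swp p) (tp p)).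
Proof.
move=> h1; case: p => [|[|p]] h2 /=; rewrite /Tm /sgA /rotb /swp /tp /=;
  (do ?(case: ifP => ?)); intros; lia.
Qed.

Lemma max_new n p b : (2 <= n)%N -> (p < n)%N -> (b < n)%N ->
  Tm n p b && (b != sgA n (swp p) (tp p)) = Tm n p.+1 b.
Proof.
move=> h1; case: p => [|[|p]] h2 h3 /=; rewrite /Tm /sgA /rotb /swp /tp /=;
  (do ?(case: ifP => ?)); intros; lia.
Qed.

Lemma tp_le p : (tp p <= 1)%N.
Proof. by rewrite /tp; case: ifP. Qed.

Lemma max_run (R : numDomainType) (s : nat -> R) n d (hd : (0 < d)%N) (hn : (2 <= n)%N)
  (i0 i1 : 'I_n) (h0 : val i0 = 0%N) (h1 : val i1 = 1%N) p :
  (p <= n)%N -> forall x : 'I_(d * n),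
  (x \in avail (permute_profile (@Pprof d n) (tperm i0 i1)) (fun _ => d) p) = Tm n p (x %/ d)%N.
Proof.
elim: p => [|p IH] hp x; first by rewrite /= in_setT.
have hin : (p < n)%N by [].
have hQ : forall j : 'I_(d * n),
    (permute_profile (@Pprof d n) (tperm i0 i1) (Ordinal hin) j %/ d)%N
    = sgA n (swp p) (j %/ d)%N.
  by move=> j; rewrite /permute_profile Pprof_div tperm_val.
have htm : ((tp p).+1 * d <= d * n)%N by have := tp_le p; nia.
have [_ H] := exact_step s hd (@sgA_inj n (swp p)) hQ (T := Tm n p)
  (IH (ltnW hp)) (t := tp p) (fun b hb => max_hb hn hin hb) (max_ht hn hin) htm.
by rewrite H max_new // blk_lt.
Qed.

Lemma max_util (R : numDomainType) (s : nat -> R) n d (hd : (0 < d)%N) (hn : (2 <= n)%N)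
  (i0 i1 : 'I_n) (h0 : val i0 = 0%N) (h1 : val i1 = 1%N) (a : 'I_n) :
  utility s (permute_profile (@Pprof d n) (tperm i0 i1)) (fun _ => d) a
  = \sum_(i < d) s (tp a * d + i).+1.
Proof.
have hin := ltn_ord a.
have hQ : forall j : 'I_(d * n),
    (permute_profile (@Pprof d n) (tperm i0 i1) a j %/ d)%N = sgA n (swp a) (j %/ d)%N.
  by move=> j; rewrite /permute_profile Pprof_div tperm_val.
have htm : ((tp a).+1 * d <= d * n)%N by have := tp_le a; nia.
have [-> _] := exact_step s hd (@sgA_inj n (swp a)) hQ (T := Tm n a)
  (max_run s hd hn h0 h1 (ltnW hin)) (t := tp a) (fun b hb => max_hb hn hin hb)
  (max_ht hn hin) htm.
by [].
Qed.


Definition blk (R : numDomainType) (s : nat -> R) d a := \sum_(i < d) s (a * d + i)%N.+1.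

Lemma natsum (R : numDomainType) (s : nat -> R) d a lo hi :
  lo = (a * d)%N -> hi = (lo + d)%N -> \sum_(lo.+1 <= j < hi.+1) s j = blk s d a.
Proof.
move=> -> ->; rewrite -{1}(add0n (a * d).+1) big_addn.
have -> : ((a * d + d).+1 - (a * d).+1 = d)%N by lia.
rewrite big_mkord; apply: eq_bigr => i _; congr s; lia.
Qed.

Lemma sumall (R : numDomainType) (s : nat -> R) d N :
  \sum_(1 <= j < (N * d).+1) s j = \sum_(a < N) blk s d a.
Proof.
elim: N => [|N IH]; first by rewrite big_ord0 mul0n big_geq.
rewrite big_ord_recr /= -IH (big_cat_nat _ (n := (N * d).+1)) //=; last by rewrite ltnS mulSn; lia.
by rewrite (natsum s (d:=d) (a:=N) (lo:=N * d) (hi:=N.+1 * d)) // mulSn addnC.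
Qed.

Lemma prodall (R : numDomainType) (s : nat -> R) d n :
  \prod_(1 <= i < n.+1) \sum_(((i - 1) * d).+1 <= j < (i * d).+1) s j
  = \prod_(a < n) blk s d a.
Proof.
rewrite big_add1 /= big_mkord; apply: eq_bigr => a _.
by apply: natsum; rewrite ?subn1 //= mulSn addnC.
Qed.

Lemma price_bounds (R : realFieldType) (I : finType) (f : I -> R) (lo hi vmax vmin : R) p1 p2 :
  0 < lo -> (forall i, lo <= f i <= hi) -> vmax <= f p2 -> f p1 <= vmin -> 0 <= vmax ->
  vmax / vmin <= seqmax [seq f i | i <- enum I] / seqmin [seq f i | i <- enum I] <= hi / lo.
Proof.
move=> hlo hb h2 h1 h0.
have ne : [seq f i | i <- enum I] != [::].
  by apply/eqP => /(congr1 (fun l => f p1 \in l)); rewrite map_f ?mem_enum.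
have Mge : f p2 <= seqmax [seq f i | i <- enum I] by apply: seqmax_ge; rewrite map_f ?mem_enum.
have mle : seqmin [seq f i | i <- enum I] <= f p1 by apply: seqmin_le; rewrite map_f ?mem_enum.
have mge : lo <= seqmin [seq f i | i <- enum I].
  by apply: seqmin_ge => // x /mapP [i _ ->]; case/andP: (hb i).
have Mle : seqmax [seq f i | i <- enum I] <= hi.
  by apply: seqmax_le => // x /mapP [i _ ->]; case/andP: (hb i).
have hp2 : lo <= f p2 by case/andP: (hb p2).
apply/andP; split.
  apply: div_le => //; [exact: le_trans Mge | exact: lt_le_trans mge | exact: le_trans h1].
apply: div_le => //; apply: le_trans Mge; exact: le_trans (ltW hlo) hp2.
Qed.

Lemma blk_pos (R : numDomainType) (s : nat -> R) d n a (hd : (0 < d)%N)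
  (hpos : forall j, (1 <= j <= d * n)%N -> 0 < s j) : (a < n)%N -> 0 < blk s d a.
Proof.
move=> ha; rewrite /blk; case: d hd hpos => // d _ hpos.
rewrite big_ord_recl ltr_pwDl ?hpos //; first by apply/andP; split => //; rewrite /= addn0; nia.
apply: sumr_ge0 => i _; apply: ltW; apply: hpos; have hi := ltn_ord (lift ord0 i); apply/andP; split; nia.
Qed.

Lemma blk_mono (R : numDomainType) (s : nat -> R) d n a b
  (hmono : forall i j, (1 <= i <= j)%N -> (j <= d * n)%N -> s j <= s i) :
  (a <= b)%N -> (b < n)%N -> blk s d b <= blk s d a.
Proof.
move=> hab hb; apply: ler_sum => i _; have hi := ltn_ord i; apply: hmono; [apply/andP; split|]; nia.
Qed.

Lemma tp_sum (R : numDomainType) (s : nat -> R) d n (i1 : 'I_n) (h1 : val i1 = 1%N) :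
  \sum_(a : 'I_n) blk s d (tp a) = (n - 1)%:R * blk s d 0 + blk s d 1.
Proof.
rewrite (bigD1 i1) //= {1}/tp h1 /= addrC; congr (_ + _).
rewrite (eq_bigr (fun _ => blk s d 0)); last first.
  move=> a ha; rewrite /tp ifN //; apply: contra ha => /eqP e.
  by apply/eqP; apply: val_inj; rewrite /= e h1.
rewrite sumr_const cardC1 card_ord mulr_natl; congr (_ *+ _); lia.
Qed.

Lemma tp_prod (R : numDomainType) (s : nat -> R) d n (i1 : 'I_n) (h1 : val i1 = 1%N) :
  \prod_(a : 'I_n) blk s d (tp a) = blk s d 0 ^+ (n - 1) * blk s d 1.
Proof.
rewrite (bigD1 i1) //= {1}/tp h1 /= mulrC; congr (_ * _).
rewrite (eq_bigr (fun _ => blk s d 0)); last first.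
  move=> a ha; rewrite /tp ifN //; apply: contra ha => /eqP e.
  by apply/eqP; apply: val_inj; rewrite /= e h1.
rewrite prodr_const cardC1 card_ord; congr (_ ^+ _); lia.
Qed.


Unset Implicit Arguments. Set Strict Implicit.

Theorem proposition3 (R : realFieldType) (n m d : nat) (s : nat -> R)
  (hn : (2 <= n)%N) (hd : (0 < d)%N) (hm : m = (d * n)%N)
  (hpos : forall j, (1 <= j <= m)%N -> 0 < s j)
  (hmono : forall i j, (1 <= i <= j)%N -> (j <= m)%N -> s j <= s i) :
  exists P : profile n m,
    let k : 'I_n -> nat := fun _ => d in
    let S1 := \sum_(1 <= j < d.+1) s j in
    let S2 := \sum_(d.+1 <= j < (2 * d).+1) s j in
    let Stot := \sum_(1 <= j < m.+1) s j in
    let Slast := \sum_(((n - 1) * d).+1 <= j < m.+1) s j in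
    let Pblocks := \prod_(1 <= i < n.+1) \sum_(((i - 1) * d).+1 <= j < (i * d).+1) s j in
    [/\ ((n - 1)%:R * S1 + S2) / Stot <= price_AtoP (SWu s) P k <= n%:R * S1 / Stot,
        S2 / Slast <= price_AtoP (SWe s) P k <= S1 / Slast
      & S1 ^+ (n - 1) * S2 / Pblocks <= price_AtoP (SWn s) P k <= S1 ^+ n / Pblocks].
Proof.
subst m; exists (@Pprof d n).
move=> k S1 S2 Stot Slast Pblocks.
have hS1 : S1 = blk s d 0 by apply: (natsum s (a:=0) (lo:=0) (hi:=d)).
have hS2 : S2 = blk s d 1.
  by apply: (natsum s (a:=1) (lo:=d) (hi:=2 * d)); rewrite ?mul1n // mul2n addnn.
have hSl : Slast = blk s d (n - 1).
  apply: (natsum s (a:=n - 1) (lo:=(n - 1) * d) (hi:=d * n)) => //.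
  nia.
have hSt : Stot = \sum_(a < n) blk s d a.
  by rewrite /Stot (_ : (d * n).+1 = (n * d).+1) ?sumall // mulnC.
have hPb : Pblocks = \prod_(a < n) blk s d a by apply: prodall.
rewrite hS1 hS2 hSl hSt hPb {}/k.
have h0n : (0 < n)%N by apply: leq_trans hn.
have h1n : (1 < n)%N by [].
have hln : (n.-1 < n)%N by rewrite prednK.
pose i0 : 'I_n := Ordinal h0n.
pose i1 : 'I_n := Ordinal h1n.
pose il : 'I_n := Ordinal hln.
have hbpos : forall a, (a < n)%N -> 0 < blk s d a.
  by move=> a ha; exact: (blk_pos (n:=n) hd hpos ha).
have hbmono : forall a b, (a <= b)%N -> (b < n)%N -> blk s d b <= blk s d a.
  by move=> a b hab hb; exact: (blk_mono (n:=n) hmono hab hb).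
have hU : forall pi (a : 'I_n),
    blk s d a <= utility s (permute_profile (@Pprof d n) pi) (fun _ => d) a <= blk s d 0.
  move=> pi a.
  have := util_bounds (s:=s) (permute_profile (@Pprof d n) pi) (erefl (d * n)%N) hmono a.
  have e1 : blk s d a = \sum_(i < d) s (i + a * d)%N.+1.
    by apply: eq_bigr => i _; rewrite addnC.
  have e2 : blk s d 0 = \sum_(i < d) s i.+1.
    by apply: eq_bigr => i _; rewrite mul0n add0n.
  by rewrite e1 e2.
have hId : forall a : 'I_n,
    utility s (permute_profile (@Pprof d n) 1) (fun _ => d) a = blk s d a.
  by move=> a; rewrite id_util.
have hMx : forall a : 'I_n,
    utility s (permute_profile (@Pprof d n) (tperm i0 i1)) (fun _ => d) a = blk s d (tp a).
  by move=> a; rewrite (max_util s hd hn (i0 := i0) (i1 := i1)).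
have hb0 : 0 < blk s d 0 by apply: hbpos.
have hb1 : 0 < blk s d 1 by apply: hbpos.
have hlo : 0 < \sum_(a < n) blk s d a.
  by rewrite (bigD1 i0) //= ltr_pwDl ?hbpos // sumr_ge0 // => a _; rewrite ltW ?hbpos.
have hne : forall (g : 'I_n -> R), [seq g a | a <- enum 'I_n] != [::].
  move=> g; apply/eqP => /(congr1 (fun l => g i0 \in l)).
  by rewrite map_f ?mem_enum.
split.
- rewrite /price_AtoP.
  apply: (price_bounds (f := fun pi => SWu s (permute_profile (@Pprof d n) pi) (fun _ => d))
    (p1 := 1%g) (p2 := tperm i0 i1)) => //.
  + move=> pi; rewrite /SWu; apply/andP; split.
      by apply: ler_sum => a _; case/andP: (hU pi a).
    apply: le_trans (_ : \sum_(a < n) blk s d 0 <= _).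
      by apply: ler_sum => a _; case/andP: (hU pi a).
    by rewrite sumr_const card_ord mulr_natl.
  + by rewrite /SWu (eq_bigr _ (fun a _ => hMx a)) (@tp_sum _ s d n i1 erefl).
  + by rewrite /SWu (eq_bigr _ (fun a _ => hId a)).
  + by apply: addr_ge0; [apply: mulr_ge0; [apply: ler0n | apply: ltW] | apply: ltW].
- rewrite /price_AtoP.
  apply: (price_bounds (f := fun pi => SWe s (permute_profile (@Pprof d n) pi) (fun _ => d))
    (p1 := 1%g) (p2 := tperm i0 i1)) => //.
  + by apply: hbpos; rewrite subn1.
  + move=> pi; rewrite /SWe; apply/andP; split.
      apply: seqmin_ge => // x /mapP [a _ ->].
      apply: le_trans (_ : blk s d a <= _); last by case/andP: (hU pi a).
      by have ha := ltn_ord a; apply: hbmono; lia.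
    apply: le_trans (seqmin_le (x := utility s (permute_profile (@Pprof d n) pi) (fun _ => d) i0) _) _.
      by rewrite map_f ?mem_enum.
    by case/andP: (hU pi i0).
  + rewrite /SWe; apply: seqmin_ge => // x /mapP [a _ ->].
    by rewrite hMx; apply: hbmono => //; apply: tp_le.
  + rewrite /SWe; apply: le_trans (seqmin_le (x := utility s (permute_profile (@Pprof d n) 1) (fun _ => d) il) _) _.
      by rewrite map_f ?mem_enum.
    by rewrite hId /= subn1.
  + by rewrite ltW.
rewrite /price_AtoP.
apply: (price_bounds (f := fun pi => SWn s (permute_profile (@Pprof d n) pi) (fun _ => d))
  (p1 := 1%g) (p2 := tperm i0 i1)) => //.
+ by apply: prodr_gt0 => a _; apply: hbpos.
+ move=> pi; rewrite /SWn; apply/andP; split.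
    by apply: ler_prod => a _; case/andP: (hU pi a) => h _; rewrite h andbT ltW ?hbpos.
  apply: le_trans (_ : \prod_(a < n) blk s d 0 <= _).
    apply: ler_prod => a _; case/andP: (hU pi a) => h1 h2.
    by rewrite h2 andbT (le_trans _ h1) // ltW ?hbpos.
  by rewrite prodr_const card_ord.
+ by rewrite /SWn (eq_bigr _ (fun a _ => hMx a)) (@tp_prod _ s d n i1 erefl).
+ by rewrite /SWn (eq_bigr _ (fun a _ => hId a)).
+ by rewrite mulr_ge0 ?exprn_ge0 ?ltW.
Qed.
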